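(* Let $\equiv_2$ be the equivalence relation on $\mathfrak S_n$ generated by the relations $bac\equiv_2 bca$ and $abc\equiv_2 acb$ for letters $a<b<c$ in three consecutive positions. For every $\sigma\in\mathfrak S_n$, the set of linear extensions of the poset $P_2(\sigma)$ (equivalently, words listing the values $1,\ldots,n$ once each in which every vertex of the tree $P_2(\sigma)$ appears to the right of its parent) is exactly the $\equiv_2$-class of $\sigma$.
   Context: For $\sigma=\sigma_1\cdots\sigma_n\in\mathfrak S_n$, let $m_1>m_2>\cdots>m_k=1$ be the left-to-right minima of $\sigma$, i.e. the values $\sigma_j$ all of whose left neighbours in the word are greater, listed from left to right. $P_2(\sigma)$ is the poset whose Hasse diagram is the rooted tree obtained as follows: the chain $m_1,m_2,\ldots,m_k$ with $m_1$ at the top (root), each $m_{i+1}$ a child of $m_i$; every other value $\sigma_j$ is attached as a leaf (child) of the topmost chain element $m_i$ with $m_i<\sigma_j$. Example: for $\sigma=739465281$ the chain is $7,3,2,1$, the values $8,9$ are leaves of $7$, and $4,5,6$ are leaves of $3$. *)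

(* Defs.v *)
From mathcomp Require Import all_boot.
From Stdlib Require Import Relation_Operators.
Set Implicit Arguments. Unset Strict Implicit. Unset Printing Implicit Defensive.

(* A permutation of [n] = {1,...,n} is represented as a word (seq nat)
   listing the values 1..n once each. *)
Definition is_perm (n : nat) (w : seq nat) : bool := perm_eq w (iota 1 n).

Definition lrmin (w : seq nat) : seq nat :=
  [seq nth 0 w j | j <- iota 0 (size w)
                 & all (fun i => nth 0 w j < nth 0 w i) (iota 0 j)].

Definition P2_parent (w : seq nat) (v : nat) : option nat :=
  let c := lrmin w in
  if v \in c then
    (if index v c is i.+1 then Some (nth 0 c i) else None)
  else Some (nth 0 c (find (fun m => m < v) c)).

Definition P2_cover (w : seq nat) (p v : nat) : bool :=
  (v \in w) && (P2_parent w v == Some p).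

Definition P2_linext (n : nat) (sigma tau : seq nat) : Prop :=
  is_perm n tau /\
  forall p v, P2_cover sigma p v -> index p tau < index v tau.

Inductive equiv2_step : seq nat -> seq nat -> Prop :=
| e2_bac (x y : seq nat) (a b c : nat) : a < b -> b < c ->
    equiv2_step (x ++ [:: b; a; c] ++ y) (x ++ [:: b; c; a] ++ y)
| e2_abc (x y : seq nat) (a b c : nat) : a < b -> b < c ->
    equiv2_step (x ++ [:: a; b; c] ++ y) (x ++ [:: a; c; b] ++ y).

Definition equiv2 : seq nat -> seq nat -> Prop :=
  clos_refl_sym_trans (seq nat) equiv2_step.

(* Main.v *)
Require Import Defs.
From mathcomp Require Import all_boot zify.
From Stdlib Require Import Relation_Operators.
Set Implicit Arguments. Unset Strict Implicit. Unset Printing Implicit Defensive.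

Fixpoint lrm (m : nat) (w : seq nat) : seq nat :=
  if w is x :: w' then (if x < m then x :: lrm x w' else lrm m w') else [::].

Lemma lrm_gen w p m : (forall y, all (fun z => y < z) p = (y < m)) ->
  [seq nth 0 (p ++ w) j | j <- iota (size p) (size w)
     & all (fun i => nth 0 (p ++ w) j < nth 0 (p ++ w) i) (iota 0 j)] = lrm m w.
Proof.
elim: w p m => [|x w IH] p m Hm //=.
have Hx : nth 0 (p ++ x :: w) (size p) = x by rewrite nth_cat ltnn subnn.
have -> : all (fun i => nth 0 (p ++ x :: w) (size p) < nth 0 (p ++ x :: w) i) (iota 0 (size p)) = (x < m).
  rewrite Hx -Hm.
  rewrite -[in RHS](mkseq_nth 0 p) /mkseq all_map.
  apply: eq_in_all => i; rewrite mem_iota add0n => /andP[_ Hi] /=.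
  by rewrite nth_cat Hi.
have Hcat : p ++ x :: w = rcons p x ++ w by rewrite cat_rcons.
have Hs : (size p).+1 = size (rcons p x) by rewrite size_rcons.
have IH' := IH (rcons p x) (if x < m then x else m).
case: ifP => Hxm /=; rewrite Hxm in IH'.
- rewrite Hx Hcat Hs; congr (_ :: _); apply: IH' => y.
  rewrite all_rcons; apply/andP/idP => [[]//|H]; split => //.
  by rewrite Hm; lia.
- rewrite Hcat Hs; apply: IH' => y.
  rewrite all_rcons Hm; apply/andP/idP => [[]//|H]; split => //.
  lia.
Qed.

Lemma lrmin_cons x w : lrmin (x :: w) = x :: lrm x w.
Proof.
rewrite /lrmin /=.
have H : forall y, all (fun z => y < z) [:: x] = (y < x) by move=> y; rewrite /= andbT.
have := lrm_gen w H.
by move=> /= <-.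
Qed.

Lemma lrm_big w m : all (fun y => y < m) w -> lrmin w = lrm m w.
Proof. by case: w => [|x w] //= /andP[H _]; rewrite lrmin_cons H. Qed.

Lemma bound_ex w : exists m, all (fun y => y < m) w.
Proof.
exists (sumn w).+1; apply/allP; elim: w => [|x w IH] //= y; rewrite inE => /orP[/eqP->|/IH]; lia.
Qed.

Lemma lrm_step s t : (forall m y, lrm m (s ++ y) = lrm m (t ++ y)) ->
  forall x m y, lrm m (x ++ s ++ y) = lrm m (x ++ t ++ y).
Proof. move=> H; elim=> [|z x IH] m y //=; by case: ifP => _; rewrite IH. Qed.

Lemma lrm_bac a b c : a < b -> b < c -> forall m y,
  lrm m ([:: b; a; c] ++ y) = lrm m ([:: b; c; a] ++ y).
Proof.
move=> ab bc m y /=.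
by do ![case: ifP => ? /=]; try lia.
Qed.

Lemma lrm_abc a b c : a < b -> b < c -> forall m y,
  lrm m ([:: a; b; c] ++ y) = lrm m ([:: a; c; b] ++ y).
Proof.
move=> ab bc m y /=.
by do ![case: ifP => ? /=]; try lia.
Qed.

Lemma all_perm (P : pred nat) s t : perm_eq s t -> all P s = all P t.
Proof. by move=> H; apply: eq_all_r; apply: perm_mem. Qed.

Lemma step_lrmin s t : equiv2_step s t -> lrmin s = lrmin t.
Proof.
case=> x y a b c ab bc.
- have [m Hm] := bound_ex (x ++ [:: b; a; c] ++ y).
  have Hm' : all (fun z => z < m) (x ++ [:: b; c; a] ++ y).
    rewrite -(all_perm _ (s := x ++ [:: b; a; c] ++ y)) //.
    by rewrite perm_cat2l perm_cat2r perm_cons (perm_catC [:: a] [:: c]).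
  rewrite (lrm_big Hm) (lrm_big Hm'); apply: lrm_step => m' y'.
  exact: lrm_bac.
- have [m Hm] := bound_ex (x ++ [:: a; b; c] ++ y).
  have Hm' : all (fun z => z < m) (x ++ [:: a; c; b] ++ y).
    rewrite -(all_perm _ (s := x ++ [:: a; b; c] ++ y)) //.
    by rewrite perm_cat2l perm_cat2r perm_cons (perm_catC [:: b] [:: c]).
  rewrite (lrm_big Hm) (lrm_big Hm'); apply: lrm_step => m' y'.
  exact: lrm_abc.
Qed.

Lemma lrm_sub m w x : x \in lrm m w -> x \in w.
Proof.
elim: w m => [|y w IH] m //=; case: ifP => _.
- by rewrite !inE => /orP[->|/IH ->] //; rewrite orbT.
- by move/IH; rewrite inE => ->; rewrite orbT.
Qed.

Lemma lrm_consec w m v j : uniq w -> v \in lrm m w -> index v (lrm m w) = j.+1 ->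
  index (nth 0 (lrm m w) j) w < index v w.
Proof.
elim: w m j => [|y w IH] m j //= /andP[yw uw].
have Hy : forall z, z \in lrm y w -> (y == z) = false.
  by move=> z /lrm_sub zw; apply/eqP => E; move: yw; rewrite E zw.
have Hm : forall z, z \in lrm m w -> (y == z) = false.
  by move=> z /lrm_sub zw; apply/eqP => E; move: yw; rewrite E zw.
case: ifP => _ /=.
- case: (eqVneq y v) => [<-|yv] //.
  rewrite inE eq_sym (negbTE yv) /= => vin [].
  case: j => [|j] /=.
  + by rewrite eqxx.
  + move=> Hj.
    have Hin : nth 0 (lrm y w) j \in lrm y w.
      apply: mem_nth; have := index_size v (lrm y w); lia.
    by rewrite (Hy _ Hin) ltnS; apply: IH.
- move=> Hv Hj.
  have Hin : nth 0 (lrm m w) j \in lrm m w.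
    apply: mem_nth; have := index_size v (lrm m w); lia.
  by rewrite (Hm _ Hin) (Hm _ Hv) ltnS; apply: IH.
Qed.

Lemma lrm_find w m v : uniq w -> v \in w -> v \notin lrm m w -> v < m ->
  has (fun z => z < v) (lrm m w) /\
  index (nth 0 (lrm m w) (find (fun z => z < v) (lrm m w))) w < index v w.
Proof.
elim: w m => [|y w IH] m //= /andP[yw uw].
have Hy : forall z, z \in lrm y w -> (y == z) = false.
  by move=> z /lrm_sub zw; apply/eqP => E; move: yw; rewrite E zw.
have Hm : forall z, z \in lrm m w -> (y == z) = false.
  by move=> z /lrm_sub zw; apply/eqP => E; move: yw; rewrite E zw.
rewrite inE; case: ifP => ym.
- rewrite inE negb_or => /orP[/eqP->|vw] /andP[vy vn] vm /=; first by rewrite eqxx in vy.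
  rewrite (eq_sym y v) (negbTE vy).
  case: (ltnP y v) => yv /=; first by rewrite eqxx.
  have yv' : v < y by rewrite ltn_neqAle vy.
  have [H1 H2] := IH y uw vw vn yv'.
  split => //.
  have Hin : nth 0 (lrm y w) (find (fun z => z < v) (lrm y w)) \in lrm y w
    by apply: mem_nth; rewrite -has_find.
  by rewrite (Hy _ Hin) ltnS.
- move=> /orP[/eqP E|vw] vn vm; first by move: ym; rewrite -E vm.
  have [H1 H2] := IH m uw vw vn vm.
  split => //.
  have Hin : nth 0 (lrm m w) (find (fun z => z < v) (lrm m w)) \in lrm m w
    by apply: mem_nth; rewrite -has_find.
  have vy : (y == v) = false by apply/eqP => E; move: yw; rewrite E vw.
  by rewrite (Hm _ Hin) vy ltnS.
Qed.

Lemma cover_index w p v : uniq w -> P2_cover w p v -> index p w < index v w.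
Proof.
move=> uw /andP[vw]; have [m Hm] := bound_ex w.
rewrite /P2_parent (lrm_big Hm).
case: ifP => vc.
- case E: (index v (lrm m w)) => [|j] //= /eqP[<-].
  by apply: lrm_consec => //; rewrite vc.
- move=> /eqP[<-].
  have vm : v < m by move/allP: Hm; apply.
  by have [] := lrm_find uw vw (negbT vc) vm.
Qed.

Lemma step_perm s t : equiv2_step s t -> perm_eq s t.
Proof.
case=> x y a b c _ _; rewrite perm_cat2l perm_cat2r perm_cons.
- by rewrite (perm_catC [:: a] [:: c]).
- by rewrite (perm_catC [:: b] [:: c]).
Qed.

Lemma equiv2_inv s t : equiv2 s t -> perm_eq s t /\ lrmin s = lrmin t.
Proof.
elim=> {s t} [s t H|s|s t _ [H1 H2]|s t u _ [H1 H2] _ [H3 H4]].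
- by split; [apply: step_perm | apply: step_lrmin].
- by [].
- by rewrite perm_sym H1 H2.
- by split; [apply: perm_trans H3 | rewrite H2 H4].
Qed.

Lemma dir1 n sigma tau : is_perm n sigma -> equiv2 sigma tau -> P2_linext n sigma tau.
Proof.
move=> Hs /equiv2_inv [Hp Hl]; split.
- by rewrite /is_perm -(permPl Hp).
- move=> p v; rewrite /P2_cover /P2_parent Hl (perm_mem Hp) => H.
  apply: cover_index; last by rewrite /P2_cover /P2_parent.
  by rewrite -(perm_uniq Hp) (perm_uniq Hs) iota_uniq.
Qed.

Lemma equiv2_ctx x y s t : equiv2 s t -> equiv2 (x ++ s ++ y) (x ++ t ++ y).
Proof.
elim=> {s t} [s t H|s|s t _ H|s t u _ H1 _ H2].
- apply: rst_step; case: H => x' y' a b c ab bc.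
  + have := e2_bac (x ++ x') (y' ++ y) ab bc; by rewrite -!catA.
  + have := e2_abc (x ++ x') (y' ++ y) ab bc; by rewrite -!catA.
- exact: rst_refl.
- exact: rst_sym.
- exact: rst_trans H2.
Qed.

Lemma move_end N y p : p != [::] -> all (fun z => z < N) (p ++ y) -> uniq (p ++ y) ->
  equiv2 (p ++ N :: y) (p ++ y ++ [:: N]).
Proof.
elim: y p => [|a y IH] p pn Ha Hu; first exact: rst_refl.
apply: (@rst_trans _ _ _ ((p ++ [:: a]) ++ N :: y)).
- case/lastP: p pn Ha Hu => [|p0 z] // _ Ha Hu.
  have zN : z < N by move/allP: Ha; apply; rewrite mem_cat mem_rcons inE eqxx.
  have aN : a < N by move/allP: Ha; apply; rewrite mem_cat inE eqxx orbT.
  have za : z != a.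
    apply/eqP => E; move: Hu; rewrite -cats1 -catA cat_uniq => /and3P[_ _] /=.
    by rewrite inE E eqxx.
  have -> : rcons p0 z ++ N :: a :: y = p0 ++ [:: z; N; a] ++ y by rewrite -cats1 -catA.
  have -> : (rcons p0 z ++ [:: a]) ++ N :: y = p0 ++ [:: z; a; N] ++ y by rewrite -cats1 -!catA.
  apply: rst_sym; apply: rst_step.
  case: (ltngtP z a) za => // H _.
  + exact: e2_abc.
  + exact: e2_bac.
- rewrite -catA /=; have := IH (p ++ [:: a]); rewrite -!catA /=; apply => //.
  by case: p pn {Ha Hu}.
Qed.

Lemma lrm_skipN N y x m : m <= N -> lrm m (x ++ N :: y) = lrm m (x ++ y).
Proof.
elim: x m => [|z x IH] m mN /=.
- by have -> : (N < m) = false by lia.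
- by case: ifP => H; rewrite IH //; lia.
Qed.

Lemma lrmin_rem N z x y : z < N -> lrmin (z :: x ++ N :: y) = lrmin (z :: x ++ y).
Proof. by move=> zN; rewrite !lrmin_cons lrm_skipN // ltnW. Qed.

Lemma lrmin_top N w : all (fun z => z < N) w -> lrmin (N :: w) = N :: lrmin w.
Proof. by move=> H; rewrite lrmin_cons (lrm_big H). Qed.

Lemma lrm_lt m w x : x \in lrm m w -> x < m.
Proof.
elim: w m => [|y w IH] m //=; case: ifP => ym.
- by rewrite inE => /orP[/eqP->//|/IH]; lia.
- exact: IH.
Qed.

Lemma cover_top N w p v : all (fun z => z < N) w -> P2_cover w p v -> P2_cover (N :: w) p v.
Proof.
move=> H /andP[vw]; rewrite /P2_cover inE vw orbT /=.
have vN : N != v by apply/eqP => E; move/allP: H => /(_ v vw); rewrite E ltnn.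
rewrite /P2_parent (lrmin_top H) inE (eq_sym v N) (negbTE vN) /=.
rewrite (negbTE vN).
have -> : (N < v) = false by move/allP: H => /(_ v vw); lia.
by case: ifP => _ //; destruct (index v (lrmin w)).
Qed.

Lemma parent_some N w v : all (fun z => z < N) w -> v \in w -> exists p, P2_parent (N :: w) v = Some p.
Proof.
move=> H vw.
have vN : N != v by apply/eqP => E; move/allP: H => /(_ v vw); rewrite E ltnn.
rewrite /P2_parent (lrmin_top H) /= (negbTE vN).
by case: ifP => _; eexists.
Qed.

Lemma parent_N N z x y : z < N -> P2_parent (z :: x ++ N :: y) N = Some z.
Proof.
move=> zN; rewrite /P2_parent lrmin_cons inE.
have -> : (N == z) = false by apply/negbTE; rewrite neq_ltn zN orbT.
have -> : (N \in lrm z (x ++ N :: y)) = false.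
  by apply/negbTE; apply/negP => /lrm_lt; lia.
by rewrite /= zN.
Qed.

Lemma idx_rem (X Y : seq nat) (N p v : nat) : p != N -> v != N ->
  index p (X ++ N :: Y) < index v (X ++ N :: Y) -> index p (X ++ Y) < index v (X ++ Y).
Proof.
move=> pN vN; rewrite !index_cat /= (eq_sym N p) (eq_sym N v) (negbTE pN) (negbTE vN).
case: ifP => HpX; case: ifP => HvX; try lia.
move: HpX; rewrite -index_mem => H _; exact: leq_trans H (leq_addr _ _).
Qed.

Lemma cover_mem w p v : uniq w -> P2_cover w p v -> p \in w.
Proof.
move=> uw H; have := cover_index uw H; rewrite -index_mem => H'.
by apply: leq_trans H' _; apply: index_size.
Qed.

Lemma perm_helper (N : nat) (s t : seq nat) : perm_eq (N :: s) (t ++ [:: N]) -> perm_eq s t.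
Proof.
move=> H; rewrite -(perm_cons N); apply: perm_trans H _.
by rewrite cats1 perm_rcons.
Qed.

Lemma perm_mid (N : nat) (x y : seq nat) : perm_eq (x ++ N :: y) (N :: x ++ y).
Proof. by rewrite -cat1s perm_catCA. Qed.

Lemma iotaSr n : iota 1 n.+1 = iota 1 n ++ [:: n.+1].
Proof. by have := iotaD 1 n 1; rewrite addn1 add1n => ->. Qed.

Lemma dir2 n : forall sigma tau, is_perm n sigma -> is_perm n tau ->
  (forall p v, P2_cover sigma p v -> index p tau < index v tau) -> equiv2 sigma tau.
Proof.
elim: n => [|n IH] sigma tau.
- rewrite /is_perm /= => /perm_size Hs /perm_size Ht _.
  by case: sigma Hs => // _; case: tau Ht => // _; apply: rst_refl.
set N := n.+1.
rewrite /is_perm iotaSr => Hs Ht Hc.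
have NS : N \in sigma by rewrite (perm_mem Hs) mem_cat inE eqxx orbT.
have NT : N \in tau by rewrite (perm_mem Ht) mem_cat inE eqxx orbT.
have allP' : forall s, perm_eq s (iota 1 n) -> all (fun z => z < N) s.
  by move=> s Hp; apply/allP => z; rewrite (perm_mem Hp) mem_iota; lia.
have uni : forall s, perm_eq s (iota 1 n) -> uniq s.
  by move=> s Hp; rewrite (perm_uniq Hp) iota_uniq.
case: sigma Hs Hc NS => [|z s] // Hs Hc NS.
case: tau Ht Hc NT => [|h t] // Ht Hc NT.
case: (eqVneq z N) => [zN|zN].
-
  subst z.
  have Hs' := perm_helper Hs.
  have aS := allP' _ Hs'.
  case: (eqVneq h N) => [hN|hN].
  + subst h.
    have Ht' := perm_helper Ht.
    have := IH s t Hs' Ht'.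
    have E : equiv2 s t.
      apply: IH => // p v Hpv.
      have pN : p != N.
        apply/eqP => E; have := cover_mem (uni _ Hs') Hpv; rewrite E.
        by move/allP: aS => Hx /Hx; rewrite ltnn.
      have vN : v != N.
        apply/eqP => E; move: Hpv => /andP[]; rewrite E.
        by move/allP: aS => Hx /Hx; rewrite ltnn.
      have := Hc p v (cover_top aS Hpv).
      by rewrite /= (eq_sym N p) (eq_sym N v) (negbTE pN) (negbTE vN).
    move=> _; have := equiv2_ctx [:: N] [::] E; by rewrite !cats0.
  + have hs : h \in s.
      have : h \in N :: s by rewrite (perm_mem Hs) -(perm_mem Ht) mem_head.
      by rewrite inE (negbTE hN).
    have [p Hp] := parent_some aS hs.
    have := Hc p h; rewrite /P2_cover Hp eqxx inE hs orbT /= eqxx => /(_ isT).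
    by [].
-
  have Ns : N \in s by move: NS; rewrite inE eq_sym (negbTE zN).
  move: Hs Hc NS; case/splitPr: Ns => x y Hs Hc NS.
  have zlt : z < N.
    have : z \in iota 1 n ++ [:: N] by rewrite -(perm_mem Hs) mem_head.
    rewrite mem_cat inE (negbTE zN) orbF mem_iota; lia.
  have Hs' : perm_eq (z :: x ++ y) (iota 1 n).
    apply: perm_helper; apply: perm_trans Hs.
    by rewrite perm_sym -cat_cons perm_mid.
  have aS := allP' _ Hs'.
  have hN : h != N.
    apply/eqP => E; subst h.
    have := Hc z N; rewrite /P2_cover -cat_cons parent_N // eqxx mem_cat inE eqxx !orbT /= eqxx.
    by move=> /(_ isT).
  have Nt : N \in t by move: NT; rewrite inE eq_sym (negbTE hN).
  move: Ht Hc NT; case/splitPr: Nt => x' y' Ht Hc NT.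
  have hlt : h < N.
    have : h \in iota 1 n ++ [:: N] by rewrite -(perm_mem Ht) mem_head.
    rewrite mem_cat inE (negbTE hN) orbF mem_iota; lia.
  have Ht' : perm_eq (h :: x' ++ y') (iota 1 n).
    apply: perm_helper; apply: perm_trans Ht.
    by rewrite perm_sym -cat_cons perm_mid.
  have aT := allP' _ Ht'.
  have E : equiv2 (z :: x ++ y) (h :: x' ++ y').
    apply: IH => // p v Hpv.
    have pN : p != N.
      apply/eqP => E; have := cover_mem (uni _ Hs') Hpv; rewrite E.
      by move/allP: aS => Hx /Hx; rewrite ltnn.
    have vN : v != N.
      apply/eqP => E; move: Hpv => /andP[]; rewrite E.
      by move/allP: aS => Hx /Hx; rewrite ltnn.
    have Hpv2 : P2_cover (z :: x ++ N :: y) p v.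
      move: Hpv; rewrite /P2_cover /P2_parent lrmin_rem // => /andP[vin ->].
      by move: vin; rewrite !inE !mem_cat !inE => /orP[->|/orP[->|->]]; rewrite ?orbT.
    have := Hc p v Hpv2.
    rewrite -!cat_cons; exact: idx_rem.
  have E1 : equiv2 ((z :: x) ++ N :: y) ((z :: x) ++ y ++ [:: N]).
    by apply: move_end => //; exact: uni.
  have E2 : equiv2 ((h :: x') ++ N :: y') ((h :: x') ++ y' ++ [:: N]).
    by apply: move_end => //; exact: uni.
  apply: (rst_trans _ _ _ _ _ E1).
  apply: (rst_trans _ _ _ _ _ _ (rst_sym _ _ _ _ E2)).
  have := equiv2_ctx [::] [:: N] E.
  by rewrite /= -!catA.
Qed.

Theorem mainTheorem12 (n : nat) (sigma : seq nat) :
  is_perm n sigma ->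
  forall tau : seq nat, P2_linext n sigma tau <-> equiv2 sigma tau.
Proof.
move=> Hs tau; split.
- by case=> Ht Hc; apply: dir2 Hs Ht Hc.
- exact: dir1.
Qed.
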